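(* Let $(\Omega,\mu)$ be a measure space with a $\sigma$-additive $\sigma$-finite measure, let $G$ be a discrete group, and let $\{\theta_g\}_{g\in G}$ be a group of (algebra) automorphisms of $L^\infty_\mu(\Omega)$ (with $\theta_{gh}=\theta_g\theta_h$). Let $M$ be the maximal ideal space of $L^\infty_\mu(\Omega)$, $\Gamma:L^\infty_\mu(\Omega)\to C(M)$ the Gelfand isomorphism, and let $t_g:M\to M$ be the homeomorphisms such that $\Gamma(\theta_g(z))(m)=\Gamma(z)(t_g^{-1}(m))$ for all $z\in L^\infty_\mu(\Omega)$, $m\in M$. For each class $\Delta$ of measurable sets (modulo null sets) define $\alpha_g(\Delta)$ by $\theta_g(\chi_\Delta)=\chi_{\alpha_g(\Delta)}$. Then the following are equivalent: (a) $G$ acts metrically freely, i.e. for every finite set $\{g_1,\dots,g_k\}\subset G$ and every measurable $\Delta$ with $\mu(\Delta)>0$ there exists a measurable $\Delta'\subset\Delta$ with $\mu(\Delta')>0$ and $\mu(\alpha_{g_i}(\Delta')\cap\alpha_{g_j}(\Delta'))=0$ for all $i\ne j$; (b) $G$ acts topologically freely on $M$, i.e. for every finite set $\{g_1,\dots,g_k\}\subset G$ and every nonempty open $U\subset M$ there exists a nonempty open $V\subset U$ with $t_{g_i}(V)\cap t_{g_j}(V)=\emptyset$ for all $i\neq j$.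
   Context: $\chi_\Delta$ denotes the characteristic function of $\Delta$ in $L^\infty_\mu(\Omega)$; since $\theta_g(\chi_\Delta)$ is again an idempotent of $L^\infty_\mu(\Omega)$, it is the characteristic function of a (class of) measurable set, which is denoted $\alpha_g(\Delta)$. $\mu(\Delta)>0$ iff $\chi_\Delta\neq 0$. *)

(* Defs.v *)
From HB Require Import structures.
From mathcomp Require Import all_boot all_order all_algebra.
From mathcomp Require Import all_classical all_reals all_analysis.
From mathcomp Require Import complex.
Set Implicit Arguments. Unset Strict Implicit. Unset Printing Implicit Defensive.
Import Order.TTheory GRing.Theory Num.Theory.
Local Open Scope classical_set_scope.
Local Open Scope ring_scope.

Section Linfty.
Context {d : measure_display} {T : measurableType d} {R : realType}.
Variable mu : {measure set T -> \bar R}.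
Local Notation C := (R[i]).

Definition Linf (f : T -> C) : Prop :=
  [/\ measurable_fun setT (fun x => complex.Re (f x)),
      measurable_fun setT (fun x => complex.Im (f x)) &
      exists c : R, {ae mu, forall x, `|complex.Re (f x)| <= c /\ `|complex.Im (f x)| <= c}].

Definition aeeq (f g : T -> C) : Prop := {ae mu, forall x, f x = g x}.

Definition chi (A : set T) : T -> C := fun x => if `[< A x >] then 1 else 0.

(* theta acts on representatives and induces a (complex, unital) algebra
   automorphism of L^oo_mu(Omega) = {Linf functions} / aeeq. *)
Definition Linf_automorphism (th : (T -> C) -> (T -> C)) : Prop :=
  [/\ forall f, Linf f -> Linf (th f),
      forall f g, Linf f -> Linf g -> aeeq f g -> aeeq (th f) (th g),
      [/\ 
      forall (a : C) f g, Linf f -> Linf g ->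
        aeeq (th (fun x => a * f x + g x)) (fun x => a * th f x + th g x),
      forall f g, Linf f -> Linf g ->
        aeeq (th (fun x => f x * g x)) (fun x => th f x * th g x) &
      aeeq (th (fun _ => 1)) (fun _ => 1)],
      forall f, Linf f -> aeeq (th f) (fun _ => 0) -> aeeq f (fun _ => 0) &
      forall h, Linf h -> exists2 f, Linf f & aeeq (th f) h].

(* Points of the maximal ideal space M of L^oo: the characters (nonzero
   multiplicative linear functionals) of L^oo, represented as functionals on
   representatives which are compatible with aeeq, and normalized to be 0
   outside L^oo (so that each character has exactly one representative). *)
Definition character (phi : (T -> C) -> C) : Prop :=
  [/\ forall f, ~ Linf f -> phi f = 0,
      forall f g, Linf f -> Linf g -> aeeq f g -> phi f = phi g,
      forall (a : C) f g, Linf f -> Linf g ->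
        phi (fun x => a * f x + g x) = a * phi f + phi g,
      forall f g, Linf f -> Linf g ->
        phi (fun x => f x * g x) = phi f * phi g &
      phi (fun _ => 1) = 1].

Definition max_ideal_space : set ((T -> C) -> C) := [set phi | character phi].

Definition gelfand (z : T -> C) (m : (T -> C) -> C) : C := m z.

(* Gelfand (weak-star) topology on M: the coarsest topology making every
   Gamma(z), z in L^oo, continuous. *)
Definition gelfand_open (U : set ((T -> C) -> C)) : Prop :=
  U `<=` max_ideal_space /\
  forall phi, U phi ->
    exists n (zs : 'I_n -> (T -> C)) (e : R),
      [/\ 0 < e, forall i, Linf (zs i) &
          [set psi | max_ideal_space psi /\
             forall i, `|gelfand (zs i) psi - gelfand (zs i) phi| < (e%:C)%C]
          `<=` U].

(* (a) metrically free action; alpha_g(D) is any measurable A with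
   theta_g(chi_D) = chi_A in L^oo. *)
Definition metrically_free (G : Type) (th : G -> (T -> C) -> (T -> C)) : Prop :=
  forall k (gs : 'I_k -> G), injective gs ->
  forall D, measurable D -> (0 < mu D)%E ->
  exists D', [/\ measurable D', D' `<=` D, (0 < mu D')%E &
    forall i j, i != j -> forall A B, measurable A -> measurable B ->
      aeeq (th (gs i) (chi D')) (chi A) ->
      aeeq (th (gs j) (chi D')) (chi B) -> mu (A `&` B) = 0%E].

Definition topologically_free (G : Type)
    (t : G -> ((T -> C) -> C) -> ((T -> C) -> C)) : Prop :=
  forall k (gs : 'I_k -> G), injective gs ->
  forall U, gelfand_open U -> U !=set0 ->
  exists V, [/\ gelfand_open V, V `<=` U, V !=set0 &
    forall i j, i != j -> t (gs i) @` V `&` t (gs j) @` V = set0].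

End Linfty.

(* Main.v *)
Require Import Defs.
From HB Require Import structures.
From mathcomp Require Import all_boot all_order all_algebra.
From mathcomp Require Import all_classical all_reals all_analysis.
From mathcomp Require Import complex.
From mathcomp Require Import measurable_realfun.
From mathcomp Require Import ring lra.
Import Order.TTheory GRing.Theory Num.Theory.
Set Implicit Arguments. Unset Strict Implicit. Unset Printing Implicit Defensive.
Local Open Scope classical_set_scope.
Local Open Scope ring_scope.
Section S.
Context {R : realType}.
Local Notation C := (R[i]).
Lemma cReD (x y : C) : complex.Re (x + y) = complex.Re x + complex.Re y.
Proof. by case: x y => a b [c d]. Qed.
Lemma cImD (x y : C) : complex.Im (x + y) = complex.Im x + complex.Im y.
Proof. by case: x y => a b [c d]. Qed.
Lemma cReM (x y : C) : complex.Re (x * y) = complex.Re x * complex.Re y - complex.Im x * complex.Im y.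
Proof. by case: x y => a b [c d]. Qed.
Lemma cImM (x y : C) : complex.Im (x * y) = complex.Re x * complex.Im y + complex.Im x * complex.Re y.
Proof. by case: x y => a b [c d]. Qed.
Lemma cplxE (x : C) : x = ((complex.Re x) +i* (complex.Im x))%C.
Proof. by case: x. Qed.
Lemma ceqP (x y : C) : complex.Re x = complex.Re y -> complex.Im x = complex.Im y -> x = y.
Proof. by case: x y => a b [c d] /= -> ->. Qed.
Lemma Re_norm (x : C) : ((`|complex.Re x|)%:C)%C <= `|x|.
Proof.
rewrite normc_def lecR -sqrtr_sqr; apply: ler_wsqrtr.
rewrite lerDl; exact: sqr_ge0.
Qed.
Lemma Im_norm (x : C) : ((`|complex.Im x|)%:C)%C <= `|x|.
Proof.
rewrite normc_def lecR -sqrtr_sqr; apply: ler_wsqrtr.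
rewrite lerDr; exact: sqr_ge0.
Qed.
Lemma norm_ReIm (x : C) : `|x| <= ((`|complex.Re x| + `|complex.Im x|)%:C)%C.
Proof.
rewrite normc_def lecR -[X in _ <= X]ger0_norm ?addr_ge0 //.
rewrite -sqrtr_sqr; apply: ler_wsqrtr.
rewrite sqrrD -[complex.Re x ^+ 2]real_normK ?num_real // -[complex.Im x ^+ 2]real_normK ?num_real //.
rewrite -addrA lerD2l lerDr; apply: mulrn_wge0; exact: mulr_ge0.
Qed.

Lemma normC_lt (u : C) (r : R) : 0 < r ->
  (`|u| < (r%:C)%C) = (complex.Re u ^+ 2 + complex.Im u ^+ 2 < r ^+ 2).
Proof.
move=> r0; rewrite normc_def ltcR -[X in _ = X]ltr_sqrt ?exprn_gt0 //.
by rewrite sqrtr_sqr ger0_norm // ltW.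
Qed.
Lemma normC_ge (u : C) (r : R) : 0 < r ->
  ((r%:C)%C <= `|u|) = (r ^+ 2 <= complex.Re u ^+ 2 + complex.Im u ^+ 2).
Proof.
move=> r0; rewrite normc_def lecR -[X in _ = X]ler_sqrt ?addr_ge0 ?sqr_ge0 //.
by rewrite sqrtr_sqr ger0_norm // ltW.
Qed.
Lemma bnd_inv (i a b dl : R) : 0 <= i -> i <= 1 -> 0 < dl ->
  `|i * a * (Num.max (a^+2 + b^+2) (dl^+2))^-1| <= dl^-2 + 1.
Proof.
move=> i0 i1 d0.
set m := Num.max _ _.
have hm1 : a^+2 + b^+2 <= m by rewrite le_max lexx.
have hm2 : dl^+2 <= m by rewrite le_max lexx orbT.
have d2 : 0 < dl ^+ 2 by rewrite exprn_gt0.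
have m0 : 0 < m by apply: lt_le_trans hm2.
rewrite normrM normfV (gtr0_norm m0) ler_pdivrMr //.
have ha : `|a| <= 1 + a ^+ 2.
  case: (lerP 0 a) => ha; [rewrite ger0_norm //|rewrite ltr0_norm //]; nra.
have hi : `|i * a| <= `|a| by rewrite normrM ger0_norm // ler_piMl.
apply: (le_trans hi); apply: (le_trans ha).
rewrite mulrDl mul1r.
have : 1 <= dl^-2 * m.
  by rewrite -ler_pdivrMl ?invr_gt0 // invrK mulr1.
have : 0 <= b ^+ 2 by apply: sqr_ge0.
lra.
Qed.
End S.
Section L.
Context {d : measure_display} {T : measurableType d} {R : realType}.
Variable mu : {measure set T -> \bar R}.
Local Notation C := (R[i]).
Local Notation Re := complex.Re.
Local Notation Im := complex.Im.
Definition cmeas (f : T -> C) := measurable_fun setT (fun x => Re (f x)) /\ measurable_fun setT (fun x => Im (f x)).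

Lemma Linf_of f : cmeas f -> (exists K : R, {ae mu, forall x, `|f x| <= (K%:C)%C}) -> Linf mu f.
Proof.
move=> [h1 h2] [K hK]; split => //; exists K.
apply: filterS hK => x fx; split; rewrite -lecR; apply: le_trans fx.
  exact: Re_norm.
exact: Im_norm.
Qed.

Lemma Linf_bound f : Linf mu f -> exists K : R, {ae mu, forall x, `|f x| <= (K%:C)%C}.
Proof.
move=> [_ _ [c hc]]; exists (c + c); apply: filterS hc => x [h1 h2].
apply: le_trans (norm_ReIm _) _; rewrite lecR; exact: lerD.
Qed.

Lemma Linf_cmeas f : Linf mu f -> cmeas f.
Proof. by case. Qed.

Lemma cmeas_cst (c : C) : cmeas (fun _ => c).
Proof. by split; apply: measurable_cst. Qed.

Lemma cmeas_lin (a : C) f g : cmeas f -> cmeas g -> cmeas (fun x => a * f x + g x).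
Proof.
move=> [f1 f2] [g1 g2]; split.
  rewrite (_ : (fun x => _) = (fun x => (Re a * Re (f x) - Im a * Im (f x)) + Re (g x))); last first.
    by apply: funext => x; rewrite cReD cReM.
  apply: measurable_funD => //; apply: measurable_funB; apply: measurable_funM => //; exact: measurable_cst.
rewrite (_ : (fun x => _) = (fun x => (Re a * Im (f x) + Im a * Re (f x)) + Im (g x))); last first.
  by apply: funext => x; rewrite cImD cImM.
apply: measurable_funD => //; apply: measurable_funD; apply: measurable_funM => //; exact: measurable_cst.
Qed.

Lemma cmeas_mul f g : cmeas f -> cmeas g -> cmeas (fun x => f x * g x).
Proof.
move=> [f1 f2] [g1 g2]; split.
  rewrite (_ : (fun x => _) = (fun x => (Re (f x) * Re (g x) - Im (f x) * Im (g x)))); last first.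
    by apply: funext => x; rewrite cReM.
  by apply: measurable_funB; apply: measurable_funM.
rewrite (_ : (fun x => _) = (fun x => (Re (f x) * Im (g x) + Im (f x) * Re (g x)))); last first.
  by apply: funext => x; rewrite cImM.
by apply: measurable_funD; apply: measurable_funM.
Qed.

Lemma cmeas_chi A : measurable A -> cmeas (chi A).
Proof.
move=> mA; split.
  rewrite (_ : (fun x => _) = \1_A); first exact: measurable_indic.
  apply: funext => x; rewrite /chi /indic; case: asboolP => /=.
    by move=> Ax; rewrite mem_set.
  by move=> nAx; rewrite memNset.
rewrite (_ : (fun x => _) = (fun _ => 0)); first exact: measurable_cst.
by apply: funext => x; rewrite /chi; case: asboolP.
Qed.

Lemma Linf_cst (c : C) : Linf mu (fun _ => c).
Proof.
apply: Linf_of; first exact: cmeas_cst.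
exists (Re `|c|); apply: nearW => x.
by rewrite RRe_real ?normr_real.
Qed.

Lemma Linf_lin (a : C) f g : Linf mu f -> Linf mu g -> Linf mu (fun x => a * f x + g x).
Proof.
move=> hf hg; apply: Linf_of; first by apply: cmeas_lin; exact: Linf_cmeas.
have [K1 h1] := Linf_bound hf; have [K2 h2] := Linf_bound hg.
exists (Re `|a| * K1 + K2); apply: filterS2 h1 h2 => x fx gx.
apply: le_trans (ler_normD _ _) _.
rewrite rmorphD rmorphM /=.
apply: lerD => //; rewrite normrM; apply: ler_wpM2l => //.
Qed.

Lemma Linf_mul f g : Linf mu f -> Linf mu g -> Linf mu (fun x => f x * g x).
Proof.
move=> hf hg; apply: Linf_of; first by apply: cmeas_mul; exact: Linf_cmeas.
have [K1 h1] := Linf_bound hf; have [K2 h2] := Linf_bound hg.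
exists (K1 * K2); apply: filterS2 h1 h2 => x fx gx.
rewrite normrM rmorphM /=; apply: ler_pM => //.
Qed.

Lemma Linf_chi A : measurable A -> Linf mu (chi A).
Proof.
move=> mA; apply: Linf_of; first exact: cmeas_chi.
exists 1; apply: nearW => x; rewrite /chi; case: asboolP => _.
  by rewrite normr1.
by rewrite normr0.
Qed.

Lemma chi_mul (A B : set T) : chi (A `&` B) = (fun x => chi A x * chi B x :> C).
Proof.
apply: funext => x; rewrite /chi.
case: asboolP => [[ha hb]|hn].
  by rewrite (asboolT ha) (asboolT hb) mulr1.
case: asboolP => ha; case: asboolP => hb; rewrite ?mulr0 ?mul0r //.
by exfalso; apply: hn.
Qed.

Lemma chiT : chi (R:=R) (@setT T) = (fun _ : T => 1 : C).
Proof. by apply: funext => x; rewrite /chi asboolT. Qed.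

Section Chr.
Variable phi : (T -> C) -> C.
Hypothesis hphi : character mu phi.

Lemma chr_ae f g : Linf mu f -> Linf mu g -> aeeq mu f g -> phi f = phi g.
Proof. by case: hphi => _ h _ _ _; apply: h. Qed.

Lemma chr_lin (a : C) f g : Linf mu f -> Linf mu g ->
  phi (fun x => a * f x + g x) = a * phi f + phi g.
Proof. by case: hphi => _ _ h _ _; apply: h. Qed.

Lemma chr_mul f g : Linf mu f -> Linf mu g ->
  phi (fun x => f x * g x) = phi f * phi g.
Proof. by case: hphi => _ _ _ h _; apply: h. Qed.

Lemma chr_1 : phi (fun _ => 1) = 1.
Proof. by case: hphi. Qed.

Lemma chr_0 : phi (fun _ => 0) = 0.
Proof.
have h := chr_lin 1 (Linf_cst 0) (Linf_cst 0).
rewrite (_ : (fun x : T => 1 * 0 + 0) = (fun _ => 0 : C)) in h; last first.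
  by apply: funext => x; rewrite mulr0 addr0.
rewrite mul1r in h.
by apply: (addrI (phi (fun _ => 0))); rewrite addr0 -h.
Qed.

Lemma chr_cst (c : C) : phi (fun _ => c) = c.
Proof.
have h := chr_lin c (Linf_cst 1) (Linf_cst 0).
rewrite (_ : (fun x : T => c * 1 + 0) = (fun _ => c)) in h; last first.
  by apply: funext => x; rewrite mulr1 addr0.
by rewrite h chr_1 chr_0 mulr1 addr0.
Qed.

Lemma chr_subc f (c : C) : Linf mu f -> phi (fun x => 1 * f x + - c) = phi f - c.
Proof.
move=> hf; have h := chr_lin 1 hf (Linf_cst (- c)).
by rewrite h chr_cst mul1r.
Qed.

Lemma chr_chi01 A : measurable A -> phi (chi A) = 0 \/ phi (chi A) = 1.
Proof.
move=> mA; have h := chr_mul (Linf_chi mA) (Linf_chi mA).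
rewrite -chi_mul setIid in h.
have : phi (chi A) * (phi (chi A) - 1) = 0 by rewrite mulrBr mulr1 -h subrr.
move/eqP; rewrite mulf_eq0 subr_eq0 => /orP[] /eqP; by [left|right].
Qed.

Lemma chr_chiI A B : measurable A -> measurable B ->
  phi (chi (A `&` B)) = phi (chi A) * phi (chi B).
Proof. by move=> mA mB; rewrite chi_mul chr_mul //; exact: Linf_chi. Qed.

Lemma chr_null A : measurable A -> mu A = 0%E -> phi (chi A) = 0.
Proof.
move=> mA muA; rewrite -chr_0; apply: chr_ae; [exact: Linf_chi|exact: Linf_cst|].
exists A; split => // x /=; rewrite /chi; case: asboolP => //.
Qed.

Lemma chr_sub A B : measurable A -> measurable B -> A `<=` B ->
  phi (chi A) = 1 -> phi (chi B) = 1.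
Proof.
move=> mA mB AB h1.
have : phi (chi (A `&` B)) = phi (chi A) by rewrite setIidl.
rewrite chr_chiI // h1 mul1r => ->.
done.
Qed.

Lemma chr_pos A : measurable A -> phi (chi A) = 1 -> (0 < mu A)%E.
Proof.
move=> mA h; rewrite lt0e measure_ge0 andbT; apply/eqP => h0.
by move: h; rewrite chr_null // => /eqP; rewrite eq_sym oner_eq0.
Qed.

End Chr.

Lemma meas_inv (m : T -> R) (dl : R) : 0 < dl -> measurable_fun setT m ->
  (forall x, dl <= m x) -> measurable_fun setT (fun x => (m x)^-1).
Proof.
move=> d0 mm hm.
rewrite (_ : (fun x => _) = (@GRing.inv R) \o m) //.
have h1 : measurable (`]0, +oo[%classic : set R) by exact: measurable_itv.
have h2 : m @` setT `<=` `]0, +oo[%classic.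
  move=> _ [x _ <-]; rewrite /= in_itv /= andbT; exact: lt_le_trans (hm x).
have h3 : measurable_fun (`]0, +oo[%classic : set R) (@GRing.inv R).
  apply: open_continuous_measurable_fun; first by rewrite set_itvE; exact: open_gt.
  move=> x; rewrite inE /= in_itv /= andbT => x0; apply: inv_continuous.
  by rewrite gt_eqF.
exact: (measurable_comp h1 h2 h3 mm).
Qed.

Lemma inv_trick phi z B (lam : C) (dl : R) : character mu phi -> Linf mu z ->
  measurable B -> 0 < dl ->
  (forall x, B x -> ((dl%:C)%C <= `|z x - lam|)) -> phi (chi B) = 1 -> phi z <> lam.
Proof.
move=> hphi hz mB d0 hB h1 e.
pose u := fun x => 1 * z x + - lam.
have hu : Linf mu u := Linf_lin 1 hz (Linf_cst (- lam)).
have [mu1 mu2] := Linf_cmeas hu.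
pose s := fun x => Re (u x) ^+ 2 + Im (u x) ^+ 2.
pose m := fun x => Num.max (s x) (dl ^+ 2).
pose ind := fun x => Re (chi (R:=R) B x).
pose w := fun x => ((ind x * Re (u x) * (m x)^-1) +i* (- (ind x * Im (u x) * (m x)^-1)))%C.
have ms : measurable_fun setT s by apply: measurable_funD; apply: measurable_funX.
have mm : measurable_fun setT m by apply: measurable_maxr => //; exact: measurable_cst.
have mk : measurable_fun setT (fun x => (m x)^-1).
  apply: (meas_inv (dl := dl ^+ 2)) => //; first by rewrite exprn_gt0.
  by move=> x; rewrite /m le_max lexx orbT.
have mind : measurable_fun setT ind by case: (cmeas_chi mB).
have ind01 x : 0 <= ind x /\ ind x <= 1.
  by rewrite /ind /chi; case: asboolP => _ /=; rewrite ?lexx ?ler01.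
have hw : Linf mu w.
  split.
  - by apply: measurable_funM => //; apply: measurable_funM.
  - by apply: measurable_funN; apply: measurable_funM => //; apply: measurable_funM.
  - exists (dl^-2 + 1); apply: nearW => x; have [i0 i1] := ind01 x; split => /=.
      exact: bnd_inv.
    rewrite normrN /m /s addrC; exact: bnd_inv.
have key : (fun x => w x * u x) = chi B.
  apply: funext => x; rewrite /w /ind /chi; case: asboolP => Bx /=.
    have hs : dl ^+ 2 <= s x.
      by have := hB x Bx; rewrite (normC_ge _ d0) /s /u mul1r.
    have s0 : s x != 0 by rewrite gt_eqF // (lt_le_trans _ hs) // exprn_gt0.
    rewrite /m max_l //.
    apply: ceqP; rewrite ?cReM ?cImM /=.
      move: s0; rewrite /s => s0; field; exact: s0.
    ring.
  by rewrite !mul0r oppr0 (_ : (0 +i* 0)%C = 0) // mul0r.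
have := chr_mul hphi hw hu; rewrite key h1 (chr_subc hphi) // e subrr mulr0.
by move/eqP; rewrite oner_eq0.
Qed.

Lemma chr_chiC phi A : character mu phi -> measurable A ->
  phi (chi (~` A)) = - phi (chi A) + 1.
Proof.
move=> hphi mA.
have -> : chi (~` A) = (fun x => -1 * chi A x + (fun _ => 1) x) :> (T -> C).
  apply: funext => x; rewrite /chi /=; case: (pselect (A x)) => h.
    have h' : ~ (~` A) x by [].
    by rewrite (asboolF h') (asboolT h) mulr1 addNr.
  have h' : (~` A) x by [].
  by rewrite (asboolT h') (asboolF h) mulr0 add0r.
by rewrite (chr_lin hphi) ?chr_1 ?mulN1r //; [exact: Linf_chi|exact: Linf_cst].
Qed.

Lemma nbhd_char phi z (e : R) : character mu phi -> Linf mu z -> 0 < e ->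
  exists A, [/\ measurable A, phi (chi A) = 1 &
    forall psi, character mu psi -> psi (chi A) = 1 -> `|psi z - phi z| < (e%:C)%C].
Proof.
move=> hphi hz e0.
pose c := phi z.
pose u := fun x => 1 * z x + - c.
have hu : Linf mu u := Linf_lin 1 hz (Linf_cst (- c)).
have [mu1 mu2] := Linf_cmeas hu.
pose s := fun x => Re (u x) ^+ 2 + Im (u x) ^+ 2.
have ms : measurable_fun setT s by apply: measurable_funD; apply: measurable_funX.
have e2 : 0 < e / 2 by rewrite divr_gt0.
pose A := s @^-1` `]-oo, (e/2) ^+ 2[.
have mA : measurable A.
  by have := ms measurableT _ (measurable_itv `]-oo, (e/2) ^+ 2[); rewrite setTI.
have Au x : A x <-> `|z x - c| < ((e/2)%:C)%C.
  by rewrite /A /preimage /= in_itv /= normC_lt // /s /u mul1r.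
exists A; split => //.
  case: (chr_chi01 hphi mA) => // h0; exfalso.
  have hC : phi (chi (~` A)) = 1 by rewrite chr_chiC // h0 oppr0 add0r.
  apply: (inv_trick hphi hz (measurableC mA) e2 _ hC (erefl c)).
  move=> x nA; rewrite real_leNgt ?normr_real //; last first.
    by rewrite realE lecR ltW.
  by apply/negP => /Au.
move=> psi hpsi h1; rewrite real_ltNge ?normr_real //; last first.
  by rewrite realE lecR ltW.
apply/negP => hle.
apply: (inv_trick hpsi hz mA e2 _ h1 (erefl (psi z))).
move=> x /Au hx.
have : (e%:C)%C <= `|z x - psi z| + ((e/2)%:C)%C.
  apply: (le_trans hle).
  have -> : psi z - phi z = (psi z - z x) + (z x - phi z) by rewrite addrA subrK.
  apply: (le_trans (ler_normD _ _)); rewrite distrC; apply: lerD => //.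
  exact: ltW.
rewrite -lerBlDr -rmorphB /=.
by rewrite {1}(splitr e) addrK.
Qed.

Definition Nset (A : set T) := [set psi | max_ideal_space mu psi /\ psi (chi A) = 1].

Lemma open_N U phi : gelfand_open mu U -> U phi ->
  exists A, [/\ measurable A, phi (chi A) = 1 & Nset A `<=` U].
Proof.
move=> [sub hU] Uphi.
have hphi : character mu phi := sub _ Uphi.
have [n [zs [e [e0 hzs hsub]]]] := hU _ Uphi.
have /choice [Af hAf] : forall i : 'I_n, exists A, [/\ measurable A, phi (chi A) = 1 &
    forall psi, character mu psi -> psi (chi A) = 1 -> `|psi (zs i) - phi (zs i)| < (e%:C)%C].
  by move=> i; apply: nbhd_char.
pose A := \big[setI/setT]_(i < n) Af i.
have [mA pA] : measurable A /\ phi (chi A) = 1.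
  apply: (big_ind (fun B => measurable B /\ phi (chi B) = 1)).
  - by split; [exact: measurableT|rewrite chiT chr_1].
  - move=> B1 B2 [m1 p1] [m2 p2]; split; first exact: measurableI.
    by rewrite chr_chiI // p1 p2 mulr1.
  - by move=> i _; have [] := hAf i.
exists A; split => // psi [hpsi p1]; apply: hsub; split => // i.
have [mi _ hi] := hAf i.
apply: hi => //; apply: (chr_sub hpsi mA mi _ p1).
by rewrite /A (bigD1 i) //=; apply: subIsetl.
Qed.

Lemma N_open A : measurable A -> gelfand_open mu (Nset A).
Proof.
move=> mA; split; first by move=> psi [].
move=> phi [hphi p1]; exists 1%N, (fun _ => chi A), 1; split => //.
  by move=> _; exact: Linf_chi.
move=> psi [hpsi /(_ ord0) h]; rewrite /gelfand p1 in h; split => //.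
case: (chr_chi01 hpsi mA) => // h0; move: h.
by rewrite h0 sub0r normrN normr1 (ltcR 1 1) ltxx.
Qed.

Lemma alpha_ex th D : Linf_automorphism mu th -> measurable D ->
  exists A, measurable A /\ aeeq mu (th (chi D)) (chi A).
Proof.
move=> [hL hae [hlin hmul h1] _ _] mD.
have LD := Linf_chi mD.
pose f := th (chi D).
have Lf : Linf mu f := hL _ LD.
have hm := hmul _ _ LD LD.
rewrite -chi_mul setIid in hm.
have [mRe mIm] := Linf_cmeas Lf.
pose A := [set x | Re (f x) = 1 /\ Im (f x) = 0].
have mA : measurable A.
  have h1' := mRe measurableT _ (measurable_set1 1).
  have h2' := mIm measurableT _ (measurable_set1 0).
  rewrite setTI in h1'; rewrite setTI in h2'.
  by have := measurableI _ _ h1' h2'.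
exists A; split => //.
apply: filterS hm => x hx; rewrite -/f in hx *.
have : f x * (f x - 1) = 0 by rewrite mulrBr mulr1 -hx subrr.
move/eqP; rewrite mulf_eq0 subr_eq0 => /orP[] /eqP h.
  rewrite /chi h asboolF //; rewrite /A /= h => -[] /eqP; rewrite eq_sym oner_eq0.
  done.
by rewrite /chi asboolT // /A /= h.
Qed.

Lemma t_N th (t : ((T -> C) -> C) -> ((T -> C) -> C)) D A psi :
  set_bij (max_ideal_space mu) (max_ideal_space mu) t ->
  (forall m z, max_ideal_space mu m -> Linf mu z -> gelfand (th z) (t m) = gelfand z m) ->
  Linf mu (th (chi D)) -> measurable D -> measurable A ->
  aeeq mu (th (chi D)) (chi A) -> Nset D psi -> Nset A (t psi).
Proof.
move=> [fS _ _] hg LD mD mA hae [hpsi p1]; have ht := fS _ hpsi.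
split => //.
rewrite -(chr_ae ht LD (Linf_chi mA) hae).
by have := hg psi _ hpsi (Linf_chi mD); rewrite /gelfand => ->.
Qed.

End L.

Import numFieldNormedType.Exports.

Section Ex.
Context {d : measure_display} {T : measurableType d} {R : realType}.
Variable mu : {measure set T -> \bar R}.
Local Notation C := (R[i]).
Local Notation Re := complex.Re.
Local Notation Im := complex.Im.
Variable A : set T.
Hypothesis mA : measurable A.
Hypothesis muA : (0 < mu A)%E.

Definition F0 : set_system T :=
  fun S => exists N, [/\ measurable N, mu N = 0%E & A `&` ~` N `<=` S].

Lemma F0_proper : ProperFilter F0.
Proof.
apply: Build_ProperFilter_ex.
  move=> P [N [mN N0 sP]].
  apply: contrapT => hne.
  have : A `<=` N.
    move=> x Ax; apply: contrapT => nN; apply: hne; exists x; exact: sP.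
  move=> sAN; have h := le_measure mu (mem_set mA) (mem_set mN) sAN.
  have hN : (mu N <= 0)%E by rewrite N0.
  by have := lt_le_trans muA (le_trans h hN); rewrite ltxx.
split.
- by exists set0; split => //; rewrite measure0.
- move=> P Q [N1 [m1 n1 s1]] [N2 [m2 n2 s2]]; exists (N1 `|` N2); split.
  + exact: measurableU.
  + apply/le_anti; rewrite measure_ge0 andbT.
    have z1 : (mu N1 <= 0)%E by rewrite n1.
    have z2 : (mu N2 <= 0)%E by rewrite n2.
    apply: le_trans (measureU2 mu m1 m2) _.
    by rewrite -(adde0 0%E); apply: leeD.
  + move=> x [Ax nN]; split; [apply: s1|apply: s2]; split => // h; apply: nN; [left|right]; exact: h.
- by move=> P Q PQ [N [m n s]]; exists N; split => //; apply: subset_trans PQ.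
Qed.

Section U.
Variable G : set_system T.
Hypothesis GU : UltraFilter G.
Hypothesis sFG : F0 `<=` G.

Lemma GA : G A.
Proof. by apply: sFG; exists set0; split => //. Qed.

Lemma aeG (P : T -> Prop) : {ae mu, forall x, P x} -> G [set x | P x].
Proof.
move=> [N [mN N0 sN]]; apply: sFG; exists N; split => // x [_ nN].
by apply: contrapT => nP; apply: nN; apply: sN.
Qed.

Lemma fmap_ultra (h : T -> R) : UltraFilter (h @ G).
Proof.
split; first exact: fmap_proper_filter.
move=> H HF sGH; apply/seteqP; split; last exact: sGH.
move=> S HS; case: (in_ultra_setVsetC (h @^-1` S) GU) => // hC.
have : H (~` S) by apply: sGH.
move=> HnS; have h0 : H set0 by rewrite -(setICr S); exact: filterI.
by exfalso; exact: (filter_not_empty H h0).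
Qed.

Lemma bdd_cvg (h : T -> R) (c : R) : G [set x | `|h x| <= c] -> h @ G --> lim (h @ G).
Proof.
move=> hb.
have hK : (h @ G) `[- c, c]%classic.
  apply: filterS hb => x /=; rewrite in_itv /= -ler_norml; exact.
have [p [_ clp]] := segment_compact (fmap_proper_filter h _) hK.
have hp : h @ G --> p.
  by have := ultra_cvg_clusterE (fmap_ultra h); move=> e; move: clp; rewrite e.
by rewrite (cvg_lim _ hp).
Qed.

Definition lR (h : T -> R) := lim (h @ G).

Lemma lRE h l : h @ G --> l -> lR h = l.
Proof. exact: cvg_lim. Qed.

Lemma lR_eqG h1 h2 : G [set x | h1 x = h2 x] -> lR h1 = lR h2.
Proof.
move=> he; rewrite /lR; congr (lim _); apply/funext => S; apply/propext.
split => hS.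
  change (G (h2 @^-1` S)); apply: (filterS2 _ _ (hS : G (h1 @^-1` S)) he) => x /= h e.
  by rewrite -e.
change (G (h1 @^-1` S)); apply: (filterS2 _ _ (hS : G (h2 @^-1` S)) he) => x /= h e.
by rewrite e.
Qed.

Lemma cvgRe f : Linf mu f -> (fun x => Re (f x)) @ G --> lR (fun x => Re (f x)).
Proof.
move=> [_ _ [c hc]]; apply: (@bdd_cvg _ c); have := aeG hc.
by apply: filterS => x [].
Qed.

Lemma cvgIm f : Linf mu f -> (fun x => Im (f x)) @ G --> lR (fun x => Im (f x)).
Proof.
move=> [_ _ [c hc]]; apply: (@bdd_cvg _ c); have := aeG hc.
by apply: filterS => x [].
Qed.

Definition phiU (f : T -> C) : C :=
  if `[< Linf mu f >] then ((lR (fun x => Re (f x))) +i* (lR (fun x => Im (f x))))%C else 0.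

Lemma phiU_char : character mu phiU.
Proof.
split.
- by move=> f nf; rewrite /phiU asboolF.
- move=> f g hf hg hfg; rewrite /phiU !asboolT //; have e := aeG hfg.
  by congr (_ +i* _)%C; apply: lR_eqG; apply: filterS e => x /= ->.
- move=> a f g hf hg; rewrite /phiU !asboolT //; last exact: Linf_lin.
  apply: ceqP; rewrite ?cReD ?cReM ?cImD ?cImM /=.
    rewrite (_ : (fun x => _) = (fun x => Re a * Re (f x) - Im a * Im (f x) + Re (g x))); last first.
      by apply: funext => x; rewrite cReD cReM.
    apply: lRE; apply: cvgD; last exact: cvgRe.
    by apply: cvgB; apply: cvgMl_tmp; [exact: cvgRe|exact: cvgIm].
  rewrite ?cImD ?cImM /=.
  rewrite (_ : (fun x => _) = (fun x => Re a * Im (f x) + Im a * Re (f x) + Im (g x))); last first.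
    by apply: funext => x; rewrite cImD cImM.
  apply: lRE; apply: cvgD; last exact: cvgIm.
  by apply: cvgD; apply: cvgMl_tmp; [exact: cvgIm|exact: cvgRe].
- move=> f g hf hg; rewrite /phiU !asboolT //; last exact: Linf_mul.
  apply: ceqP; rewrite ?cReM /=.
    rewrite (_ : (fun x => _) = (fun x => Re (f x) * Re (g x) - Im (f x) * Im (g x))); last first.
      by apply: funext => x; rewrite cReM.
    by apply: lRE; apply: cvgB; apply: cvgM; [exact: cvgRe|exact: cvgRe|exact: cvgIm|exact: cvgIm].
  rewrite ?cImM /=.
  rewrite (_ : (fun x => _) = (fun x => Re (f x) * Im (g x) + Im (f x) * Re (g x))); last first.
    by apply: funext => x; rewrite cImM.
  by apply: lRE; apply: cvgD; apply: cvgM; [exact: cvgRe|exact: cvgIm|exact: cvgIm|exact: cvgRe].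
- rewrite /phiU asboolT; last exact: Linf_cst.
  by apply: ceqP; apply: lRE; apply: cvg_cst.
Qed.

Lemma phiU_A : phiU (chi A) = 1.
Proof.
rewrite /phiU asboolT; last exact: Linf_chi.
have GA' := GA.
apply: ceqP; apply: lRE; apply: cvg_near_cst; apply: filterS GA' => x Ax;
  by rewrite /chi asboolT.
Qed.

End U.

Lemma exists_char : exists phi, Nset mu A phi.
Proof.
have [G [GU sFG]] := ultraFilterLemma F0_proper.
exists (phiU G); split; [exact: phiU_char|exact: phiU_A].
Qed.

End Ex.

Theorem mainTheorem2 (d : measure_display) (T : measurableType d) (R : realType)
  (mu : {measure set T -> \bar R}) (G : Type)
  (mul : G -> G -> G) (one : G) (inv : G -> G)
  (mulA : associative mul) (mul1g : left_id one mul)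
  (mulVg : forall g, mul (inv g) g = one)
  (th : G -> (T -> R[i]) -> (T -> R[i]))
  (t : G -> ((T -> R[i]) -> R[i]) -> ((T -> R[i]) -> R[i])) :
  sigma_finite setT mu ->
  (forall g, Linf_automorphism mu (th g)) ->
  (forall g h f, Linf mu f -> aeeq mu (th (mul g h) f) (th g (th h f))) ->
  (forall g, set_bij (max_ideal_space mu) (max_ideal_space mu) (t g)) ->
  (forall g m z, max_ideal_space mu m -> Linf mu z ->
     gelfand (th g z) (t g m) = gelfand z m) ->
  metrically_free mu th <-> topologically_free mu t.
Proof.
move=> _ haut _ hbij hgel; split.
  move=> hmf k gs gsinj U hU [phi Uphi].
  have [A [mA pA sAU]] := open_N hU Uphi.
  have hphi : character mu phi := hU.1 _ Uphi.
  have muA := chr_pos hphi mA pA.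
  have [D' [mD' sD' muD' hD']] := hmf k gs gsinj A mA muA.
  exists (Nset mu D'); split.
  - exact: N_open.
  - move=> psi [hpsi p1]; apply: sAU; split => //; exact: (chr_sub hpsi mD' mA sD' p1).
  - by have [psi hpsi] := exists_char mD' muD'; exists psi.
  move=> i j ij; apply/seteqP; split => // y [[m1 Vm1 e1] [m2 Vm2 e2]].
  have [Ai [mAi hAi]] := alpha_ex (haut (gs i)) mD'.
  have [Aj [mAj hAj]] := alpha_ex (haut (gs j)) mD'.
  have [hLi _ _ _ _] := haut (gs i); have [hLj _ _ _ _] := haut (gs j).
  have := t_N (hbij (gs i)) (hgel (gs i)) (hLi _ (Linf_chi mu mD')) mD' mAi hAi Vm1.
  rewrite e1 => -[hy yi].
  have := t_N (hbij (gs j)) (hgel (gs j)) (hLj _ (Linf_chi mu mD')) mD' mAj hAj Vm2.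
  rewrite e2 => -[_ yj].
  have h0 := hD' i j ij Ai Aj mAi mAj hAi hAj.
  have := chr_null hy (measurableI _ _ mAi mAj) h0.
  by rewrite (chr_chiI hy) // yi yj mulr1 => /eqP; rewrite oner_eq0.
move=> htf k gs gsinj D mD muD.
have [psi0 hpsi0] := exists_char mD muD.
have [V [oV sVU [phi Vphi] hV]] := htf k gs gsinj (Nset mu D) (N_open mu mD) (ex_intro _ psi0 hpsi0).
have [D'' [mD'' p'' sD'']] := open_N oV Vphi.
have [hphi pD] : Nset mu D phi := sVU _ Vphi.
have mD' : measurable (D'' `&` D) by exact: measurableI.
exists (D'' `&` D); split => //.
- by apply: (chr_pos hphi mD'); rewrite (chr_chiI hphi) // p'' pD mulr1.
move=> i j ij A B mA mB hA hB.
case: (eqVneq (mu (A `&` B)) 0%E) => // hne; exfalso.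
have mAB : measurable (A `&` B) by exact: measurableI.
have pos : (0 < mu (A `&` B))%E by rewrite lt0e hne measure_ge0.
have [psi [hpsi pAB]] := exists_char mAB pos.
have pA : psi (chi A) = 1 := chr_sub hpsi mAB mA (@subIsetl _ A B) pAB.
have pB : psi (chi B) = 1 := chr_sub hpsi mAB mB (@subIsetr _ A B) pAB.
have pre g E (hE : aeeq mu (th g (chi (D'' `&` D))) (chi E)) (mE : measurable E) :
    psi (chi E) = 1 -> exists2 m, V m & t g m = psi.
  move=> pE.
  have [_ _ surj] := hbij g.
  have [m hm hmpsi] := surj psi hpsi.
  exists m => //; apply: sD''; split => //.
  have [hL _ _ _ _] := haut g.
  have hgm := hgel g m _ hm (Linf_chi mu mD'); rewrite /gelfand in hgm.
  have [fS _ _] := hbij g; have ht := fS _ hm.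
  have e1 : m (chi (D'' `&` D)) = 1.
    rewrite -hgm (chr_ae ht (hL _ (Linf_chi mu mD')) (Linf_chi mu mE) hE); rewrite hmpsi; exact: pE.
  exact: (chr_sub hm mD' mD'' (@subIsetl _ D'' D) e1).
have [m1 Vm1 e1] := pre (gs i) A hA mA pA.
have [m2 Vm2 e2] := pre (gs j) B hB mB pB.
have : (t (gs i) @` V `&` t (gs j) @` V) psi by split; [exists m1|exists m2].
by rewrite (hV i j ij).
Qed.
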